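(* Let $G=(V,E)$ be a social network with seller $s$ and buyers $N$, and let the fair diffusion mechanism (FDM) be as defined in the context. Then FDM is individually rational: for every buyer $i\in N$, every true type profile $\theta$, and every feasible action profile $a\in\mathcal{F}(\theta)$ in which $i$ participates with $a_i=(v_i,r_i')$ (i.e. $i$ reports her true valuation $v_i$ and an arbitrary set $r_i'\subseteq r_i$ of invited neighbours), we have $u_i(\theta_i,a)=\pi_i(a)v_i-p_i(a)\ge 0$.
   Context: Model. A seller $s$ sells one item on an undirected graph $G=(V,E)$ with $V=N\cup\{s\}$, $N=\{1,\dots,n\}$ the buyers. Each buyer $i$ has neighbour set $r_i\subseteq V$ and private valuation $v_i\ge 0$; her type is $\theta_i=(v_i,r_i)$; the seller's valuation is $0$ and $r_s$ denotes the seller's neighbours. Each buyer reports an action $a_i=(v_i',r_i')$ with $v_i'\ge0$ the reported valuation and $r_i'\subseteq r_i$ the neighbours she invites, or $a_i=nil$ if she does not participate. A profile $a$ is feasible ($a\in\mathcal{F}(\theta)$) if every $i$ with $a_i\neq nil$ is reachable by a path $s,k_1,\dots,k_m,i$ with $k_1\in r_s$, $k_{t+1}\in r'_{k_t}$ and $i\in r'_{k_m}$. All graph notions below refer to this reported network (participating buyers, with $j$ reachable from $i$ when $j\in r_i'$, and from $s$ when $j\in r_s$); $d_i$ is the length of the shortest such path from $s$ to $i$. A mechanism gives an allocation $\pi_i(a)\in\{0,1\}$ (at most one winner) and payments $p_i(a)\in\mathbb{R}$ (negative means $i$ receives money); buyer utility is $u_i(\theta_i,a)=\pi_i(a)v_i-p_i(a)$,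 and the seller's revenue is $\sum_{i\in N}p_i(a)$. Definitions. A set $D\subseteq N$ is a cut set of buyer $i$ if no path from $s$ to $i$ exists without $D$; it is a minimal cut set if no proper subset is a cut set. $j$ is a critical ancestor of $i$ if $j$ belongs to a minimal cut set of $i$; a strong critical ancestor if $\{j\}$ is a minimal cut set of $i$; a weak critical ancestor if critical but not strong. $V_i=\{j\in N: i$ is a strong critical ancestor of $j\}$ (so $i\in V_i$); for $K\subseteq N$, $N_{-K}=N\setminus\bigcup_{i\in K}V_i$, and $N_{-i}=N_{-\{i\}}$. For $D\subseteq N$, $v_D^{1^{st}}=\max_{i\in D}v_i'$, and $g_D^{1^{st}}\in\arg\max_{i\in D}v^{1^{st}}_{V_i}$ (random tie-breaking). The strong critical ancestor sequence of $i$ is $C_i=(c_1^i,\dots,c_k^i)$, the strong critical ancestors of $i$ ordered by strictly increasing depth, with $c_k^i=i$. FDM. Let $h\in\arg\max_{i\in N}v_i'$ (random tie-breaking) and $C=(c_1,\dots,c_h)$ its strong critical ancestor sequence. For consecutive $c_j,c_{j+1}$, let $M_{c_jc_{j+1}}$ be the set of weak critical ancestors of $h$ lying on some simple path from $c_j$ to $c_{j+1}$ (for the last element the corresponding set $\{c_{j+1}\}\cup M_{c_jc_{j+1}}$ is empty). Allocation: the item goes to the first $c_j\in C$ (smallest $j$) with $v'_{c_j}=v^{1^{st}}_{N_{-(\{c_{j+1}\}\cup M_{c_jc_{j+1}})}}$; call it $c_w$, and let $\hat C=(c_1,\dots,c_w)$. Rewards: for $c_j\in\hat C$ (with $j\ge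 2$), $R_{c_j}=\big(v^{1^{st}}_{N_{-(\{c_j\}\cup \{g^{1^{st}}_{M_{c_{j-1}c_j}}\})}}-v^{1^{st}}_{N_{-(\{c_j\}\cup M_{c_{j-1}c_j})}}\big)/(|M_{c_{j-1}c_j}|+1)$; for $i\in M_{c_{j-1}c_j}$, $R_i=\big(v^{1^{st}}_{N_{-(\{i\}\cup\{c_j\})}}-v^{1^{st}}_{N_{-(\{c_j\}\cup M_{c_{j-1}c_j})}}\big)/(|M_{c_{j-1}c_j}|+1)$; otherwise $R_i=0$. Payments: $p_{c_j}=v^{1^{st}}_{N_{-c_j}}-v^{1^{st}}_{N_{-(\{c_{j+1}\}\cup M_{c_jc_{j+1}})}}-R_{c_j}$ for $c_j\in\hat C$, $j<w$; $p_{c_w}=v^{1^{st}}_{N_{-c_w}}-R_{c_w}$; $p_i=-R_i$ for $i\in M_{c_{j-1}c_j}$, $2\le j\le w$; $p_i=0$ otherwise. *)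

(* Defs.v *)
From mathcomp Require Import all_boot all_order all_algebra.
Set Implicit Arguments. Unset Strict Implicit. Unset Printing Implicit Defensive.
Import Order.TTheory GRing.Theory Num.Theory.
Local Open Scope ring_scope.

(* Buyers are 'I_n; the seller s is represented by [None] in [option 'I_n].
   Neighbour sets are sets of buyers (edges back to the seller are irrelevant
   for reachability from the seller).
   An action profile: [a i = None] is nil (non-participation),
   [a i = Some (v', r')] is the reported valuation and invited neighbours. *)
Definition profile (R : Type) (n : nat) := 'I_n -> option (R * {set 'I_n}).

Section FDM.
Variables (R : realFieldType) (n : nat).
Variable rs : {set 'I_n}.
Variable a : profile R n.

Definition part (i : 'I_n) : bool := a i != None.
Definition P : {set 'I_n} := [set i | part i].
Definition vrep (i : 'I_n) : R := if a i is Some (x, _) then x else 0.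
Definition rrep (i : 'I_n) : {set 'I_n} := if a i is Some (_, s) then s else set0.

Definition edge (D : {set 'I_n}) (x y : option 'I_n) : bool :=
  match x, y with
  | None, Some j => [&& j \in rs, part j & j \notin D]
  | Some i, Some j => [&& part i, part j, i \notin D, j \notin D & j \in rrep i]
  | _, _ => false
  end.

Definition reach (D : {set 'I_n}) (i : 'I_n) : bool :=
  connect (edge D) None (Some i).

Definition cutset (i : 'I_n) (D : {set 'I_n}) : bool := ~~ reach D i.
Definition mincut (i : 'I_n) (D : {set 'I_n}) : bool := minset (cutset i) D.
Definition critical (j i : 'I_n) : bool := [exists D, mincut i D && (j \in D)].
Definition strong (j i : 'I_n) : bool := mincut i [set j].
Definition weak (j i : 'I_n) : bool := critical j i && ~~ strong j i.

Definition Vset (i : 'I_n) : {set 'I_n} := [set j | strong i j].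
Definition Nminus (K : {set 'I_n}) : {set 'I_n} :=
  P :\: \bigcup_(j in K) Vset j.
(* v^{1st}_D (0 for the empty set) *)
Definition vmax (D : {set 'I_n}) : R := \big[Order.max/0]_(j in D) vrep j.

(* depth d_i : length of a shortest path from s in the reported network *)
Definition layer (k : nat) : {set option 'I_n} :=
  iter k (fun S => S :|: [set y | [exists x in S, edge set0 x y]]) [set None].
Definition depth (i : 'I_n) : nat :=
  find (fun k => Some i \in layer k) (iota 0 n.+1).

Definition Cseq (i : 'I_n) : seq 'I_n :=
  sort (fun x y => depth x <= depth y)%N (enum [set j | strong j i]).

Definition adj (x y : 'I_n) : bool := [&& part x, part y & y \in rrep x].

(* w lies on some simple path from x to y; a simple path visits at most n
   buyers, so it is encoded as a prefix of an n-tuple *)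
Definition onpath (x y w : 'I_n) : bool :=
  [exists t : n.-tuple 'I_n, exists k : 'I_n.+1,
     let p := take k t in
     [&& path adj x p, last x p == y, uniq (x :: p) & w \in x :: p]].

Variable h : 'I_n.
Variable gtb : {set 'I_n} -> 'I_n.

Definition Mset (x y : 'I_n) : {set 'I_n} := [set w | weak w h && onpath x y w].
Definition gset (D : {set 'I_n}) : {set 'I_n} :=
  if D == set0 then set0 else [set gtb D].

Definition C : seq 'I_n := Cseq h.
Definition c (j : nat) : 'I_n := nth h C j.
(* M_{c_j c_{j+1}} (0-indexed) *)
Definition Mseg (j : nat) : {set 'I_n} := Mset (c j) (c j.+1).
Definition Kset (j : nat) : {set 'I_n} :=
  if (j.+1 < size C)%N then c j.+1 |: Mseg j else set0.
(* winner index w (0-indexed) *)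
Definition widx : nat :=
  find (fun j => vrep (c j) == vmax (Nminus (Kset j))) (iota 0 (size C)).

(* reward of c_j, j >= 1 (0-indexed) *)
Definition Rc (j : nat) : R :=
  let M := Mseg j.-1 in
  (vmax (Nminus (c j |: gset M)) - vmax (Nminus (c j |: M))) / (#|M|%:R + 1).
(* reward of i in M_{c_{j-1} c_j} *)
Definition RM (i : 'I_n) (j : nat) : R :=
  let M := Mseg j.-1 in
  (vmax (Nminus [set i; c j]) - vmax (Nminus (c j |: M))) / (#|M|%:R + 1).

Definition alloc (i : 'I_n) : bool := (widx < size C)%N && (i == c widx).

Definition payment (i : 'I_n) : R :=
  if (i \in C) && (index i C <= widx)%N then
    let j := index i C in
    (if (j < widx)%N then vmax (Nminus [set c j]) - vmax (Nminus (Kset j))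
     else vmax (Nminus [set c j]))
    - (if j == 0%N then 0 else Rc j)
  else
    let j := find (fun j => [&& 0 < j, j <= widx & i \in Mseg j.-1]%N)
                  (iota 0 (size C)) in
    if (j < size C)%N then - RM i j else 0.

Definition utility (i : 'I_n) (vi : R) : R :=
  (if alloc i then vi else 0) - payment i.

End FDM.

Definition undirected (n : nat) (r : 'I_n -> {set 'I_n}) : Prop :=
  forall i j, (j \in r i) = (i \in r j).

Definition feasible (R : realFieldType) (n : nat) (rs : {set 'I_n})
  (r : 'I_n -> {set 'I_n}) (a : profile R n) : Prop :=
  forall i, part a i ->
    [/\ rrep a i \subset r i, 0 <= vrep a i & reach rs a set0 i].

Definition is_highest (R : realFieldType) (n : nat) (a : profile R n)
  (h : 'I_n) : Prop :=
  part a h /\ forall j, part a j -> vrep a j <= vrep a h.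

Definition valid_tiebreak (R : realFieldType) (n : nat) (rs : {set 'I_n})
  (a : profile R n) (gtb : {set 'I_n} -> 'I_n) : Prop :=
  forall D : {set 'I_n}, D != set0 ->
    gtb D \in D /\
    forall j, j \in D -> vmax a (Vset rs a j) <= vmax a (Vset rs a (gtb D)).

(* Main.v *)
Require Import Defs.
From mathcomp Require Import all_boot all_order all_algebra.
From mathcomp Require Import lra.
Import Order.TTheory GRing.Theory Num.Theory.
Set Implicit Arguments. Unset Strict Implicit. Unset Printing Implicit Defensive.

Section Graph.
Variables (R : realFieldType) (n : nat) (rs : {set 'I_n}) (a : profile R n).

Local Notation E := (edge rs a set0).
Definition notD (D : {set 'I_n}) (u : option 'I_n) : bool :=
  if u is Some k then k \notin D else true.

Lemma edgeD D u v : edge rs a D u v = [&& E u v, notD D u & notD D v].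
Proof.
case: u => [i|]; case: v => [j|] //=; rewrite ?inE ?andbT ?andbF //.
  by rewrite !andbA; case: (part a i); case: (part a j); case: (i \in D);
     case: (j \in D); case: (j \in rrep a i); rewrite ?andbF ?andbT.
by case: (j \in rs); case: (part a j); case: (j \in D).
Qed.

Lemma pathD D x p : notD D x -> (path (edge rs a D) x p <-> path E x p /\ all (notD D) p).
Proof.
elim: p x => [|y p IH] x Hx /=; first by split.
rewrite edgeD Hx /=; split.
  case/andP=> /andP[Exy Hy] /(IH y Hy) [H1 H2]; by rewrite Exy Hy H1 H2.
case=> /andP[Exy H1] /andP[Hy H2]; rewrite Exy Hy /=; apply/IH => //.
Qed.

Lemma reachD D i : reach rs a D i <->
  exists p, [/\ path E None p, last None p = Some i & all (notD D) p].
Proof.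
split.
  case/connectP=> p Hp Hl; have [H1 H2] := (pathD p (erefl true : notD D None)).1 Hp.
  by exists p.
case=> p [H1 H2 H3]; apply/connectP; exists p => //.
exact/(pathD p (erefl true : notD D None)).
Qed.

Lemma reach0 i : reach rs a set0 i <->
  exists p, path E None p /\ last None p = Some i.
Proof.
split.
  by case/reachD=> p [H1 H2 _]; exists p.
case=> p [H1 H2]; apply/reachD; exists p; split => //.
by apply/allP => -[k|] //= _; rewrite inE.
Qed.

Lemma strongE x y : strong rs a x y = reach rs a set0 y && ~~ reach rs a [set x] y.
Proof.
apply/minsetP/andP => [[H1 H2]|[H1 H2]].
  split => //; apply/negPn/negP => H; have := H2 set0 H (sub0set _).
  by move/setP/(_ x); rewrite !inE eqxx.
split => // B HB; rewrite subset1 => /orP[/eqP //|/eqP HB0].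
by move: HB; rewrite HB0 /cutset H1.
Qed.

Lemma notD1 x p : all (notD [set x]) p = (Some x \notin p).
Proof.
elim: p => [|[k|] p IH] //=; rewrite IH !inE //=.
by rewrite (inj_eq Some_inj) eq_sym negb_or.
Qed.

Lemma suffix_dom x u t suf :
  path E (Some u) suf -> last (Some u) suf = Some t -> Some x \notin suf ->
  ~~ reach rs a [set x] t -> ~~ reach rs a [set x] u.
Proof.
move=> Hp Hl Hx Ht; apply/negP => /reachD [q [Q1 Q2 Q3]].
move/negP: Ht; apply; apply/reachD; exists (q ++ suf); split.
- by rewrite cat_path Q1 Q2.
- by rewrite last_cat Q2.
- by rewrite all_cat Q3 notD1.
Qed.

Lemma prefix_path p u : path E None p -> u \in p ->
  exists q, [/\ path E None q, last None q = u, {subset q <= p},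
     (size q <= size p)%N & (last None p != u -> size q < size p)%N].
Proof.
move=> Hp Hu; case/splitPr: Hu Hp => p1 p2 Hp; exists (rcons p1 u).
move: Hp; rewrite cat_path => /andP[H1 /= /andP[H2 _]].
rewrite rcons_path H1 H2 last_rcons size_rcons size_cat /= addnS ltnS leq_addr.
split=> //.
  by move=> z; rewrite mem_rcons !inE mem_cat !inE; case/orP=> [->|->]; rewrite ?orbT.
rewrite last_cat /=; case: p2 => [|w p2] /=; first by rewrite eqxx.
by rewrite ltnS -addn1 leq_add2l.
Qed.

Lemma strong_reach_l x y : strong rs a x y -> reach rs a set0 x.
Proof.
rewrite strongE => /andP[/reach0 [p [Hp Hl]] Hn].
have Hx : Some x \in p.
  apply/negPn/negP => Hx; move/negP: Hn; apply; apply/reachD; exists p.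
  by rewrite notD1.
have [q [Q1 Q2 _ _ _]] := prefix_path Hp Hx; apply/reach0; by exists q.
Qed.

Lemma strong_trans x y z : strong rs a x y -> strong rs a y z -> strong rs a x z.
Proof.
rewrite !strongE => /andP[_ Hxy] /andP[Hz Hyz]; rewrite Hz /=.
apply/negP => /reachD [q [Q1 Q2 Q3]].
have Hy : Some y \in q.
  apply/negPn/negP => Hy; move/negP: Hyz; apply; apply/reachD; exists q.
  by rewrite notD1.
have [q' [R1 R2 R3 _ _]] := prefix_path Q1 Hy.
move/negP: Hxy; apply; apply/reachD; exists q'; split => //.
by apply/allP => w /R3 Hw; move/allP: Q3; apply.
Qed.

Lemma last_split (T : eqType) (x : T) p : x \in p ->
  exists p1 p2, p = p1 ++ x :: p2 /\ x \notin p2.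
Proof.
elim: p => [|y p IH] //; rewrite inE; case Hp: (x \in p).
  move=> _; have [p1 [p2 [-> H]]] := IH Hp; by exists (y :: p1), p2.
rewrite orbF => /eqP <-; by exists [::], p; rewrite Hp.
Qed.

Lemma strong_chain x y h : strong rs a x h -> strong rs a y h -> x != y ->
  strong rs a x y \/ strong rs a y x.
Proof.
move=> Sx Sy Hxy; move: (Sx) (Sy); rewrite !strongE => /andP[Hh Hx] /andP[_ Hy].
have [p [Hp Hl]] := (reach0 h).1 Hh.
have Yp : Some y \in p.
  apply/negPn/negP => H; move/negP: Hy; apply; apply/reachD; exists p.
  by rewrite notD1.
have [p1 [p2 [Ep Yp2]]] := last_split Yp.
move: (Hp); rewrite Ep cat_path => /andP[_ /= /andP[_ Hp2]].
have Hl2 : last (Some y) p2 = Some h by rewrite -Hl Ep last_cat.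
case Xp2: (Some x \in p2).
- right.
  have [p3 [p4 [Ep2 Xp4]]] := last_split Xp2.
  have Yp4 : Some y \notin p4.
    by apply: contra Yp2; rewrite Ep2 mem_cat inE => ->; rewrite !orbT.
  apply/andP; split.
    have Xp : Some x \in p by rewrite Ep mem_cat inE Xp2 !orbT.
    have [q [Q1 Q2 _ _ _]] := prefix_path Hp Xp; apply/reach0; by exists q.
  move: Hp2; rewrite Ep2 cat_path => /andP[_ /= /andP[_ Hp4]].
  apply: (suffix_dom Hp4 _ Yp4 Hy).
  by rewrite -Hl2 Ep2 last_cat.
- left; apply/andP; split.
    have [q [Q1 Q2 _ _ _]] := prefix_path Hp Yp; apply/reach0; by exists q.
  by apply: (suffix_dom Hp2 Hl2 _ Hx); rewrite Xp2.
Qed.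


Lemma layerS k : layer rs a k.+1 =
  layer rs a k :|: [set y | [exists x in layer rs a k, E x y]].
Proof. by []. Qed.

Lemma layer_succ k u v : u \in layer rs a k -> E u v -> v \in layer rs a k.+1.
Proof.
move=> Hu Huv; rewrite layerS !inE; apply/orP; right.
by apply/existsP; exists u; rewrite Hu.
Qed.

Lemma path_layer m u p : u \in layer rs a m -> path E u p ->
  last u p \in layer rs a (m + size p).
Proof.
elim: p m u => [|v p IH] m u Hu /=; first by rewrite addn0.
case/andP=> Huv Hp; rewrite addnS -addSn; apply: IH => //.
exact: layer_succ Huv.
Qed.

Lemma layer_path k u : u \in layer rs a k ->
  exists p, [/\ path E None p, last None p = u & (size p <= k)%N].
Proof.
elim: k u => [|k IH] u.
  by rewrite /layer /= inE => /eqP ->; exists [::].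
rewrite layerS !inE => /orP[/IH [p [H1 H2 H3]]|/existsP [x /andP[Hx Exu]]].
  by exists p; split => //; apply: leq_trans H3 _.
have [p [H1 H2 H3]] := IH x Hx; exists (rcons p u).
by rewrite rcons_path H1 H2 Exu last_rcons size_rcons ltnS.
Qed.

Lemma depth_le u k : Some u \in layer rs a k -> (k <= n)%N -> (depth rs a u <= k)%N.
Proof.
move=> Hu Hk; rewrite leqNgt; apply/negP => Hlt.
have := before_find 0%N Hlt; rewrite nth_iota ?ltnS // add0n Hu //.
Qed.

Lemma depth_in u k : Some u \in layer rs a k -> (k <= n)%N ->
  Some u \in layer rs a (depth rs a u) /\ (depth rs a u <= n)%N.
Proof.
move=> Hu Hk.
have Hh : has (fun k => Some u \in layer rs a k) (iota 0 n.+1).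
  by apply/hasP; exists k; rewrite // mem_iota add0n ltnS Hk.
have Hf := Hh; rewrite has_find size_iota ltnS in Hf.
have := nth_find 0%N Hh; rewrite nth_iota ?ltnS // add0n => ->; split => //.
Qed.

Lemma reach_layer u : reach rs a set0 u ->
  exists k, (k <= n)%N /\ Some u \in layer rs a k.
Proof.
move/reach0 => [p [Hp Hl]]; move: Hl; case: (shortenP Hp) => p' Hp' Hu _ Hl.
exists (size p'); split.
  have := max_card (mem (None :: p')); rewrite (card_uniqP Hu) card_option card_ord /=.
  by rewrite ltnS.
have H0 : None \in layer rs a 0 by rewrite /layer /= inE.
by have := path_layer H0 Hp'; rewrite Hl.
Qed.

Lemma strong_depth x y : strong rs a y x -> y != x ->
  (depth rs a y < depth rs a x)%N.
Proof.
rewrite strongE => /andP[Hx Hyx] Hne.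
have [k [Hk Hin]] := reach_layer Hx.
have [Hd Hdn] := depth_in Hin Hk.
have [p [Hp Hl Hs]] := layer_path Hd.
have Yp : Some y \in p.
  apply/negPn/negP => H; move/negP: Hyx; apply; apply/reachD; exists p.
  by rewrite notD1.
have [q [Q1 Q2 _ _ Q5]] := prefix_path Hp Yp.
have Hq : (size q < size p)%N by apply: Q5; rewrite Hl (inj_eq Some_inj) eq_sym.
have H0 : None \in layer rs a 0 by rewrite /layer /= inE.
have := path_layer H0 Q1; rewrite Q2 add0n => Hy.
apply: (leq_ltn_trans (depth_le Hy _)); first by apply: leq_trans Hdn; apply: ltnW; apply: leq_trans Hs.
exact: leq_trans Hq Hs.
Qed.

Lemma adj_path x p : path (adj a) x p -> path E (Some x) (map Some p).
Proof.
elim: p x => [|y p IH] x //= /andP[H1 H2]; rewrite IH // andbT.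
by move: H1; rewrite /adj /= !inE.
Qed.

Lemma strong_onpath x y w : strong rs a x y -> onpath a x y w ->
  w = x \/ strong rs a x w.
Proof.
move=> Sxy /existsP [t /existsP [k /and4P [Hp /eqP Hl Hu Hw]]].
move: Hp Hl Hu Hw; set p := take k t => Hp Hl Hu Hw.
rewrite inE in Hw; case/orP: Hw => [/eqP -> |Hw]; [by left | right].
have Hxp : x \notin p by move: Hu => /= /andP[].
have HE := adj_path Hp.
case/splitPr: Hw HE Hl Hxp => p1 p2 HE Hl Hxp.
move: HE; rewrite -cat_rcons map_cat cat_path => /andP[H1 H2].
rewrite last_map last_rcons in H2.
move: (Sxy); rewrite !strongE => /andP[_ Hny]; apply/andP; split.
  have [q [Q1 Q2]] := (reach0 x).1 (strong_reach_l Sxy).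
  apply/reach0; exists (q ++ map Some (rcons p1 w)); split.
    by rewrite cat_path Q1 Q2 H1.
  by rewrite last_cat Q2 last_map last_rcons.
apply: (suffix_dom H2 _ _ Hny).
  by rewrite last_map -Hl -cat_rcons last_cat last_rcons.
rewrite mem_map; last exact: Some_inj.
by apply: contra Hxp; rewrite mem_cat inE => ->; rewrite !orbT.
Qed.

End Graph.

Local Open Scope ring_scope.

Section Main.
Variables (R : realFieldType) (n : nat) (rs : {set 'I_n}) (a : profile R n).

Lemma vmax_ge0 D : 0 <= vmax a D.
Proof. by rewrite /vmax; elim/big_rec: _ => // j x _ Hx; rewrite le_max Hx orbT. Qed.

Lemma vmax_sub (A B : {set 'I_n}) : A \subset B -> vmax a A <= vmax a B.
Proof.
move=> /subsetP HAB; rewrite {1}/vmax; elim/big_ind: _ => //.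
- exact: vmax_ge0.
- by move=> x y Hx Hy; rewrite ge_max Hx Hy.
move=> j /HAB Hj; rewrite /vmax (bigD1 j) //= le_max lexx //.
Qed.

Lemma Nminus_sub (K1 K2 : {set 'I_n}) :
  (forall w, w \in K2 -> exists2 u, u \in K1 & Vset rs a w \subset Vset rs a u) ->
  Nminus rs a K1 \subset Nminus rs a K2.
Proof.
move=> H; apply/subsetP => x; rewrite !inE => /andP[Hx1 ->]; rewrite andbT.
apply: contra Hx1 => /bigcupP [w Hw Hxw]; have [u Hu /subsetP Hs] := H w Hw.
by apply/bigcupP; exists u => //; apply: Hs.
Qed.

Lemma Nminus_subK (K1 K2 : {set 'I_n}) : K2 \subset K1 -> Nminus rs a K1 \subset Nminus rs a K2.
Proof. by move=> /subsetP H; apply: Nminus_sub => w Hw; exists w; rewrite ?H. Qed.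

Lemma Vset_trans x w : strong rs a x w -> Vset rs a w \subset Vset rs a x.
Proof. by move=> H; apply/subsetP => j; rewrite !inE; apply: strong_trans. Qed.

Variables (h : 'I_n) (gtb : {set 'I_n} -> 'I_n).
Local Notation C := (C rs a h).
Local Notation c := (c rs a h).

Lemma Cstrong x : x \in C -> strong rs a x h.
Proof. by rewrite /Defs.C /Cseq mem_sort mem_enum inE. Qed.

Lemma C_uniq : uniq C.
Proof. by rewrite /Defs.C /Cseq sort_uniq enum_uniq. Qed.

Lemma KEY j : (j < size C)%N ->
  Nminus rs a [set c j] \subset Nminus rs a (Kset rs a h j).
Proof.
move=> Hj; rewrite /Kset; case: ifP => Hj1; last first.
  by apply: Nminus_sub => w; rewrite inE.
have Hx := Cstrong (mem_nth h Hj); have Hy := Cstrong (mem_nth h Hj1).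
have Hne : c j != c j.+1.
  by rewrite /Defs.c (nth_uniq h Hj Hj1 C_uniq) (ltn_eqF (ltnSn j)).
have Hd : (depth rs a (c j) <= depth rs a (c j.+1))%N.
  have Hs : sorted (fun x y => depth rs a x <= depth rs a y)%N C.
    by apply: sort_sorted => x y; apply: leq_total.
  have Htr : transitive (fun x y => depth rs a x <= depth rs a y)%N.
    by move=> x y z /= H1 H2; apply: leq_trans H1 H2.
  have := sorted_leq_nth Htr (fun x => leqnn _) h Hs; rewrite /Defs.c; apply => //; by rewrite inE.
have Sxy : strong rs a (c j) (c j.+1).
  case: (strong_chain Hx Hy Hne) => // Hyx.
  have := strong_depth Hyx; rewrite eq_sym => /(_ Hne); by rewrite ltnNge Hd.
apply: Nminus_sub => w; rewrite !inE => /orP[/eqP ->|/andP[_ Hw]].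
  by exists (c j); rewrite ?inE // Vset_trans.
exists (c j); rewrite ?inE //.
case: (strong_onpath Sxy Hw) => [->|Hs]; [exact: subxx | exact: Vset_trans].
Qed.


Hypothesis Htb : valid_tiebreak rs a gtb.

Lemma Rc_ge0 j : 0 <= Rc rs a h gtb j.
Proof.
rewrite /Rc; apply: divr_ge0; last by apply: addr_ge0; rewrite ?ler0n ?ler01.
rewrite subr_ge0; apply: vmax_sub; apply: Nminus_subK.
apply/subsetP => w; rewrite !in_setU1 /gset; case: ifP => [_|/negbT HM]; first by rewrite in_set0 orbF => ->.
rewrite in_set1 => /orP[->//|/eqP ->]; by rewrite (Htb HM).1 orbT.
Qed.

Lemma RM_ge0 i j : i \in Mseg rs a h j.-1 -> 0 <= RM rs a h i j.
Proof.
move=> Hi; rewrite /RM; apply: divr_ge0; last by apply: addr_ge0; rewrite ?ler0n ?ler01.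
rewrite subr_ge0; apply: vmax_sub; apply: Nminus_subK.
apply/subsetP => w; rewrite in_set2 in_setU1 => /orP[/eqP ->|->]; by rewrite ?Hi ?eqxx ?orbT.
Qed.

End Main.

Theorem theorem1 (R : realFieldType) (n : nat) (rs : {set 'I_n})
  (r : 'I_n -> {set 'I_n}) (v : 'I_n -> R) (a : profile R n)
  (h : 'I_n) (gtb : {set 'I_n} -> 'I_n) (i : 'I_n) (ri' : {set 'I_n}) :
  undirected r ->
  (forall j, 0 <= v j) ->
  feasible rs r a ->
  a i = Some (v i, ri') ->
  is_highest a h ->
  valid_tiebreak rs a gtb ->
  0 <= utility rs a h gtb i (v i).
Proof.
move=> _ _ _ Hai _ Htb.
have Hvi : vrep a i = v i by rewrite /vrep Hai.
have Hu := C_uniq rs a h.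
have Aidx : alloc rs a h i -> (i \in C rs a h) && (index i (C rs a h) == widx rs a h).
  rewrite /alloc => /andP[Hw /eqP Hi]; rewrite Hi mem_nth //= index_uniq //.
rewrite /utility /payment.
case: (boolP ((i \in C rs a h) && (index i (C rs a h) <= widx rs a h)%N)) => [/andP[HiC Hle]|Hn].
  set j := index i (C rs a h).
  have Hci : c rs a h j = i by rewrite /Defs.c /j nth_index.
  have Hjs : (j < size (C rs a h))%N by rewrite index_mem.
  have HR0 : 0 <= (if j == 0%N then 0 else Rc rs a h gtb j).
    by case: eqP => // _; apply: Rc_ge0.
  have HK := vmax_sub a (KEY Hjs).
  move: HR0 HK; set R0 := (if j == 0%N then 0 else _).
  set X := vmax a _; set Y := vmax a _ => HR0 HK.
  case: (ltnP j (widx rs a h)) => Hlt.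
    case Ha: (alloc rs a h i).
      by have := Aidx Ha; rewrite HiC /= -/j => /eqP Hj; rewrite Hj ltnn in Hlt.
    lra.
  have Hjw : j = widx rs a h by apply/eqP; rewrite eqn_leq Hle Hlt.
  have Ha : alloc rs a h i.
    by rewrite /alloc -Hjw Hjs /= Hci.
  rewrite Ha.
  have Hf : vrep a (c rs a h j) == vmax a (Nminus rs a (Kset rs a h j)).
    have Hh : has (fun j => vrep a (c rs a h j) == vmax a (Nminus rs a (Kset rs a h j)))
                 (iota 0 (size (C rs a h))).
      by rewrite has_find size_iota -/(widx rs a h) -Hjw.
    have := nth_find 0%N Hh; rewrite -/(widx rs a h) -Hjw nth_iota // add0n //.
  move: Hf; rewrite Hci Hvi -/Y => /eqP ->; lra.
have Ha : alloc rs a h i = false.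
  apply/negP => /Aidx /andP[HiC /eqP Hj]; by rewrite HiC Hj leqnn in Hn.
rewrite Ha.
set P := (fun j => _).
case: (boolP (find P (iota 0 (size (C rs a h))) < size (C rs a h))%N) => Hj; last by rewrite subr0.
have := @nth_find _ 0%N P (iota 0 (size (C rs a h))).
rewrite has_find size_iota => /(_ Hj); rewrite nth_iota // add0n /P.
case/and3P => _ _ HM; have := RM_ge0 HM; lra.
Qed.
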